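(* Let $\mathcal{A}$ be a complex algebra with a differential calculus $(\Omega(\mathcal{A}),d)$, and let $\mathcal{E}=\Omega^1(\mathcal{A})$, assumed to be a finitely generated projective right $\mathcal{A}$-module. Let $\wedge:\mathcal{E}\otimes_{\mathcal{A}}\mathcal{E}\to\Omega^2(\mathcal{A})$ be the map induced by the product of the calculus. Suppose the short exact sequence of right $\mathcal{A}$-modules $$0\rightarrow \ker(\wedge)\rightarrow \mathcal{E}\otimes_{\mathcal{A}}\mathcal{E}\rightarrow \mathrm{Ran}(\wedge)=\Omega^2(\mathcal{A})$$ splits. Then there exists a torsionless connection $\nabla_0$ on $\mathcal{E}$.
   Context: A differential calculus on a complex algebra $\mathcal{A}$ is a pair $(\Omega(\mathcal{A}),d)$ where $\Omega(\mathcal{A})=\oplus_{j\ge 0}\Omega^j(\mathcal{A})$, $\Omega^0(\mathcal{A})=\mathcal{A}$, each $\Omega^j(\mathcal{A})$ is an $\mathcal{A}$-$\mathcal{A}$-bimodule, there is an $\mathcal{A}$-bimodule map $\wedge:\Omega(\mathcal{A})\otimes_{\mathcal{A}}\Omega(\mathcal{A})\to\Omega(\mathcal{A})$ with $\wedge(\Omega^j\otimes_{\mathcal{A}}\Omega^k)\subseteq\Omega^{j+k}$, and maps $d:\Omega^j(\mathcal{A})\to\Omega^{j+1}(\mathcal{A})$ with $d^2=0$ and $d(\omega\wedge\eta)=d\omega\wedge\eta+(-1)^{\deg\omega}\omega\wedge d\eta$; moreover $\Omega^j(\mathcal{A})$ is the right $\mathcal{A}$-linear span of elements $da_0\wedge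 da_1\wedge\cdots\wedge da_{j-1}$. A (right) connection on $\mathcal{E}=\Omega^1(\mathcal{A})$ is a $\mathbb{C}$-linear map $\nabla:\mathcal{E}\to\mathcal{E}\otimes_{\mathcal{A}}\mathcal{E}$ with $\nabla(\omega a)=\nabla(\omega)a+\omega\otimes_{\mathcal{A}}da$ for all $\omega\in\mathcal{E}$, $a\in\mathcal{A}$. Its torsion is $T_\nabla=\wedge\circ\nabla+d:\mathcal{E}\to\Omega^2(\mathcal{A})$, and $\nabla$ is torsionless if $T_\nabla=0$. *)

(* Defs.v *)
From HB Require Import structures.
From mathcomp Require Import all_boot all_order all_algebra.
From mathcomp Require Import reals complex.
Set Implicit Arguments.
Unset Strict Implicit.
Unset Printing Implicit Defensive.
Import Order.TTheory GRing.Theory Num.Theory.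
Local Open Scope ring_scope.

Record is_bimodule (R : realType) (A : algType R[i]) (M : lmodType R[i])
    (l : A -> M -> M) (r : M -> A -> M) : Prop := {
  bm_laddr : forall a m n, l a (m + n) = l a m + l a n;
  bm_laddl : forall a b m, l (a + b) m = l a m + l b m;
  bm_lscale : forall (c : R[i]) a m, l (c *: a) m = c *: l a m;
  bm_lscaler : forall (c : R[i]) a m, l a (c *: m) = c *: l a m;
  bm_lmul : forall a b m, l (a * b) m = l a (l b m);
  bm_l1 : forall m, l 1 m = m;
  bm_raddl : forall m n a, r (m + n) a = r m a + r n a;
  bm_raddr : forall m a b, r m (a + b) = r m a + r m b;
  bm_rscale : forall (c : R[i]) m a, r m (c *: a) = c *: r m a;
  bm_rscalel : forall (c : R[i]) m a, r (c *: m) a = c *: r m a;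
  bm_rmul : forall m a b, r m (a * b) = r (r m a) b;
  bm_r1 : forall m, r m 1 = m;
  bm_lr : forall a m b, l a (r m b) = r (l a m) b
}.

Record is_tensor_product (R : realType) (A : algType R[i])
    (M N T : lmodType R[i])
    (lM : A -> M -> M) (rM : M -> A -> M)
    (lN : A -> N -> N) (rN : N -> A -> N)
    (lT : A -> T -> T) (rT : T -> A -> T) (t : M -> N -> T) : Prop := {
  tp_addl : forall m m' n, t (m + m') n = t m n + t m' n;
  tp_addr : forall m n n', t m (n + n') = t m n + t m n';
  tp_balanced : forall m a n, t (rM m a) n = t m (lN a n);
  tp_lact : forall a m n, lT a (t m n) = t (lM a m) n;
  tp_ract : forall m n a, rT (t m n) a = t m (rN n a);
  tp_univ_ex : forall (Z : zmodType) (f : M -> N -> Z),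
      (forall m m' n, f (m + m') n = f m n + f m' n) ->
      (forall m n n', f m (n + n') = f m n + f m n') ->
      (forall m a n, f (rM m a) n = f m (lN a n)) ->
      exists g : T -> Z, (forall x y, g (x + y) = g x + g y) /\
                         (forall m n, g (t m n) = f m n);
  tp_univ_uniq : forall (Z : zmodType) (g g' : T -> Z),
      (forall x y, g (x + y) = g x + g y) ->
      (forall x y, g' (x + y) = g' x + g' y) ->
      (forall m n, g (t m n) = g' (t m n)) ->
      forall x, g x = g' x
}.

(* A differential calculus on A, truncated at degree 2:
   Omega^0 = A, Omega^1 = E, Omega^2 = O2, T = E (x)_A E with pure tensor t,
   wedge : E (x)_A E -> O2 the bimodule map induced by the product
   (the products Omega^0 x Omega^j and Omega^j x Omega^0 are the bimodule
   actions), d0 : A -> E, d1 : E -> O2. *)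
Record is_calculus2 (R : realType) (A : algType R[i])
    (E T O2 : lmodType R[i])
    (lE : A -> E -> E) (rE : E -> A -> E)
    (lT : A -> T -> T) (rT : T -> A -> T)
    (lO : A -> O2 -> O2) (rO : O2 -> A -> O2)
    (t : E -> E -> T) (wedge : T -> O2) (d0 : A -> E) (d1 : E -> O2) : Prop := {
  cal_wedge_add : forall x y, wedge (x + y) = wedge x + wedge y;
  cal_wedge_l : forall a x, wedge (lT a x) = lO a (wedge x);
  cal_wedge_r : forall x a, wedge (rT x a) = rO (wedge x) a;
  cal_d0_add : forall a b, d0 (a + b) = d0 a + d0 b;
  cal_d0_scale : forall (c : R[i]) a, d0 (c *: a) = c *: d0 a;
  cal_d1_add : forall w w', d1 (w + w') = d1 w + d1 w';
  cal_d1_scale : forall (c : R[i]) w, d1 (c *: w) = c *: d1 w;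
  cal_dd : forall a, d1 (d0 a) = 0;
  cal_leibniz0 : forall a b, d0 (a * b) = rE (d0 a) b + lE a (d0 b);
  cal_leibniz1r : forall w a, d1 (rE w a) = rO (d1 w) a - wedge (t w (d0 a));
  cal_leibniz1l : forall a w, d1 (lE a w) = wedge (t (d0 a) w) + lO a (d1 w);
  cal_gen1 : forall w : E, exists s : seq (A * A),
      w = \sum_(p <- s) rE (d0 p.1) p.2;
  cal_gen2 : forall x : O2, exists s : seq (A * A * A),
      x = \sum_(p <- s) rO (wedge (t (d0 p.1.1) (d0 p.1.2))) p.2
}.

(* E is a finitely generated projective right A-module: a direct summand of
   the free right module A^n (viewed as functions 'I_n -> A), i.e. there are
   right A-linear iota : E -> A^n and pi : A^n -> E with pi \o iota = id. *)
Definition fg_projective_right (R : realType) (A : algType R[i])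
    (E : lmodType R[i]) (rE : E -> A -> E) : Prop :=
  exists (n : nat) (iota : E -> 'I_n -> A) (pi : ('I_n -> A) -> E),
    [/\ forall w w' i, iota (w + w') i = iota w i + iota w' i,
        forall w a i, iota (rE w a) i = iota w i * a,
        forall f g, pi (fun i => f i + g i) = pi f + pi g,
        forall f a, pi (fun i => f i * a) = rE (pi f) a
      & forall w, pi (iota w) = w].

Definition wedge_splits (R : realType) (A : algType R[i])
    (T O2 : lmodType R[i]) (rT : T -> A -> T) (rO : O2 -> A -> O2)
    (wedge : T -> O2) : Prop :=
  exists sigma : O2 -> T,
    [/\ forall x y, sigma (x + y) = sigma x + sigma y,
        forall x a, sigma (rO x a) = rT (sigma x) a
      & forall x, wedge (sigma x) = x].

Definition is_connection (R : realType) (A : algType R[i])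
    (E T : lmodType R[i]) (rE : E -> A -> E) (rT : T -> A -> T)
    (t : E -> E -> T) (d0 : A -> E) (nabla : E -> T) : Prop :=
  [/\ forall w w', nabla (w + w') = nabla w + nabla w',
      forall (c : R[i]) w, nabla (c *: w) = c *: nabla w
    & forall w a, nabla (rE w a) = rT (nabla w) a + t w (d0 a)].

Definition torsionless (R : realType) (E T O2 : lmodType R[i])
    (wedge : T -> O2) (d1 : E -> O2) (nabla : E -> T) : Prop :=
  forall w, wedge (nabla w) + d1 w = 0.

(* Main.v *)
Require Import Defs.
From HB Require Import structures.
From mathcomp Require Import all_boot all_order all_algebra.
From mathcomp Require Import reals complex.
From Stdlib Require Import FunctionalExtensionality.
Unset Printing Implicit Defensive.
Import GRing.Theory.
Local Open Scope ring_scope.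

Lemma add0_gen {U V : zmodType} {f : U -> V} :
  (forall x y, f (x + y) = f x + f y) -> f 0 = 0.
Proof.
move=> hf; have h : f 0 + f 0 = f 0 + 0 by rewrite -hf !addr0.
exact: addrI h.
Qed.

Lemma addN_gen {U V : zmodType} {f : U -> V} :
  (forall x y, f (x + y) = f x + f y) -> forall x y, f (x - y) = f x - f y.
Proof.
move=> hf x y; rewrite hf; congr (_ + _).
have h : f y + f (- y) = f y + - f y by rewrite -hf !subrr (add0_gen hf).
exact: addrI h.
Qed.

Lemma sum_gen {U V : zmodType} (f : U -> V) {I : Type} (s : seq I) (F : I -> U) :
  (forall x y, f (x + y) = f x + f y) -> f (\sum_(i <- s) F i) = \sum_(i <- s) f (F i).
Proof.
move=> hf; elim: s => [|x s IH]; first by rewrite !big_nil (add0_gen hf).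
by rewrite !big_cons hf IH.
Qed.

Theorem theorem3p3 (R : realType) (A : algType R[i]) (E T O2 : lmodType R[i])
    (lE : A -> E -> E) (rE : E -> A -> E)
    (lT : A -> T -> T) (rT : T -> A -> T)
    (lO : A -> O2 -> O2) (rO : O2 -> A -> O2)
    (t : E -> E -> T) (wedge : T -> O2) (d0 : A -> E) (d1 : E -> O2) :
  is_bimodule lE rE ->
  is_bimodule lT rT ->
  is_bimodule lO rO ->
  is_tensor_product lE rE lE rE lT rT t ->
  is_calculus2 lE rE lT rT lO rO t wedge d0 d1 ->
  fg_projective_right rE ->
  wedge_splits rT rO wedge ->
  exists nabla0 : E -> T,
    is_connection rE rT t d0 nabla0 /\ torsionless wedge d1 nabla0.
Proof.
move=> bmE bmT bmO tp cal [n [iota [pi [iA iR pA pR piK]]]] [sigma [sA sR sK]].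
pose e := fun i : 'I_n => pi (fun j => if j == i then 1 else 0).
pose nG := fun w => \sum_(i < n) t (e i) (d0 (iota w i)).
pose TG := fun w => wedge (nG w) + d1 w.
have pi0 : pi (fun _ => 0) = 0.
  apply: (@add0_gen _ _ (fun a : A => pi (fun _ => a))) => x y.
  by rewrite -pA.
have pisum : forall (g : 'I_n -> 'I_n -> A) (s : seq 'I_n),
    pi (fun j => \sum_(i <- s) g i j) = \sum_(i <- s) pi (g i).
  move=> g; elim=> [|x s IH].
    rewrite big_nil -pi0; congr pi; apply: functional_extensionality => j.
    by rewrite big_nil.
  rewrite big_cons -IH -pA; congr pi; apply: functional_extensionality => j.
  by rewrite big_cons.
have decomp : forall w, \sum_(i < n) rE (e i) (iota w i) = w.
  move=> w; transitivity (pi (iota w)); last exact: piK.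
  rewrite (eq_bigr (fun i => pi (fun j => (if j == i then 1 else 0) * iota w i))).
    rewrite -pisum; congr pi; apply: functional_extensionality => j.
    rewrite (eq_bigr (fun i => if i == j then iota w i else 0)).
      by rewrite -big_mkcond big_pred1_eq.
    by move=> i _; rewrite eq_sym; case: (i == j); rewrite ?mul1r ?mul0r.
  by move=> i _; rewrite -pR.
have rTadd : forall a x y, rT (x + y) a = rT x a + rT y a.
  by move=> a x y; rewrite (bm_raddl bmT).
have nGadd : forall w w', nG (w + w') = nG w + nG w'.
  move=> w w'; rewrite /nG -big_split /=; apply: eq_bigr => i _.
  by rewrite iA (cal_d0_add cal) (tp_addr tp).
have Esc : forall (c : R[i]) w, c *: w = rE w (c *: 1).
  by move=> c w; rewrite (bm_rscale bmE) (bm_r1 bmE).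
have Tsc : forall (c : R[i]) w, c *: w = rT w (c *: 1).
  by move=> c w; rewrite (bm_rscale bmT) (bm_r1 bmT).
have Osc : forall (c : R[i]) w, c *: w = rO w (c *: 1).
  by move=> c w; rewrite (bm_rscale bmO) (bm_r1 bmO).
have nGsc : forall (c : R[i]) w, nG (c *: w) = c *: nG w.
  move=> c w; rewrite /nG scaler_sumr; apply: eq_bigr => i _.
  rewrite Esc iR mulr_algr (cal_d0_scale cal) Esc -(tp_ract tp) -Tsc //.
have nGL : forall w a, nG (rE w a) = rT (nG w) a + t w (d0 a).
  move=> w a; rewrite /nG.
  rewrite (sum_gen (fun x => rT x a)) //.
  rewrite -{3}(decomp w) (sum_gen (fun x => t x (d0 a))); last first.
    by move=> x y; rewrite (tp_addl tp).
  rewrite -big_split /=; apply: eq_bigr => i _.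
  by rewrite iR (cal_leibniz0 cal) (tp_addr tp) (tp_ract tp) (tp_balanced tp).
have TGR : forall w a, TG (rE w a) = rO (TG w) a.
  move=> w a; rewrite /TG nGL (cal_wedge_add cal) (cal_wedge_r cal)
    (cal_leibniz1r cal) (bm_raddl bmO).
  by rewrite addrACA subrr addr0.
have TGadd : forall w w', TG (w + w') = TG w + TG w'.
  move=> w w'; rewrite /TG nGadd (cal_wedge_add cal) (cal_d1_add cal).
  by rewrite addrACA.
exists (fun w => nG w - sigma (TG w)); split; first split.
- move=> w w'; rewrite nGadd TGadd sA opprD addrACA //.
- move=> c w; rewrite nGsc Esc TGR sR -Tsc scalerBr //.
- move=> w a; rewrite nGL TGR sR (addN_gen (rTadd a)).
  by rewrite addrAC.
- move=> w; rewrite (addN_gen (cal_wedge_add cal)) sK /TG.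
  by rewrite opprD addrA subrr add0r addNr.
Qed.
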